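(* Let $\varphi_o$ be a $G_2$-structure on an oriented $7$-manifold with metric $g_o$, volume form $\mathrm{vol}_o$ and Hodge star $*_o$, let $w$ be a vector field, and let $\tilde\varphi = \varphi_o + w\lrcorner *_o\varphi_o$. Then the volume form of $\tilde\varphi$ is \[ \widetilde{\mathrm{vol}} = (1+|w|_o^2)^{2/3}\,\mathrm{vol}_o . \]
   Context: A $G_2$-structure on an oriented $7$-manifold $M$ is a $3$-form $\varphi$ such that at each point $p$ there are local coordinates $x^1,\dots,x^7$ with $\varphi_p = dx^{123} - dx^{167} - dx^{527} - dx^{563} + dx^{415} + dx^{426} + dx^{437}$. It determines a Riemannian metric $g$ (equal to $\sum_k dx^k\otimes dx^k$ at $p$), a volume form $\mathrm{vol}$ and Hodge star, with $g(u,v)\,\mathrm{vol} = \frac16 (u\lrcorner\varphi)\wedge(v\lrcorner\varphi)\wedge\varphi$. *)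

(* Defs.v *)
From HB Require Import structures.
From mathcomp Require Import all_boot all_order all_algebra.
From mathcomp Require Import all_classical all_reals all_analysis.
Set Implicit Arguments. Unset Strict Implicit. Unset Printing Implicit Defensive.
Import Order.TTheory GRing.Theory Num.Theory.
Local Open Scope ring_scope.

Section G2.
Variable R : realType.

(* Tangent space at a point, identified with R^7 (row vectors). *)
Definition vec := 'rV[R]_7.

Definition form3 := vec -> vec -> vec -> R.
Definition form4 := vec -> vec -> vec -> vec -> R.
Definition form7 := ('I_7 -> vec) -> R.

(* A basis of vec is given by an invertible matrix F whose rows are the basis
   vectors e_i; coordinates of v in that basis are c with c *m F = v. *)
Definition coords (F : 'M[R]_7) (v : vec) : vec := v *m invmx F.

(* i-th coordinate, 1-based as in the paper *)
Definition x (c : vec) (a : nat) : R := c ord0 (inord a.-1).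

Definition dx3 (a b c : nat) (u v w : vec) : R :=
  x u a * (x v b * x w c - x v c * x w b)
  - x u b * (x v a * x w c - x v c * x w a)
  + x u c * (x v a * x w b - x v b * x w a).

Definition phi0 (u v w : vec) : R :=
  dx3 1 2 3 u v w - dx3 1 6 7 u v w - dx3 5 2 7 u v w - dx3 5 6 3 u v w
  + dx3 4 1 5 u v w + dx3 4 2 6 u v w + dx3 4 3 7 u v w.

(* F is a basis in which phi is the standard form, i.e. phi is a G2-structure
   with adapted coordinates given by the dual basis of F. *)
Definition adapted (phi : form3) (F : 'M[R]_7) : Prop :=
  F \in unitmx /\
  forall u v w, phi u v w = phi0 (coords F u) (coords F v) (coords F w).

Definition is_G2 (phi : form3) : Prop := exists F, adapted phi F.

Definition metric (F : 'M[R]_7) (u v : vec) : R :=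
  \sum_(j < 7) coords F u ord0 j * coords F v ord0 j.

Definition volf (F : 'M[R]_7) : form7 :=
  fun vs => \det (\matrix_(i < 7, j < 7) coords F (vs i) ord0 j).

Definition tup7 (v1 v2 v3 v4 v5 v6 v7 : vec) : 'I_7 -> vec :=
  fun i => nth 0 [:: v1; v2; v3; v4; v5; v6; v7] i.

(* Hodge star of a 3-form in the oriented orthonormal frame (row j F):
   ( *a)(v1..v4) = 1/3! sum_{j1 j2 j3} a(e_j1,e_j2,e_j3) vol(v1,..,v4,e_j1,e_j2,e_j3),
   i.e. the 4-form with  b /\ *a = g(b,a) vol. *)
Definition hodge3 (F : 'M[R]_7) (a : form3) : form4 :=
  fun v1 v2 v3 v4 =>
    (6%:R)^-1 * \sum_(j1 < 7) \sum_(j2 < 7) \sum_(j3 < 7)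
      a (row j1 F) (row j2 F) (row j3 F) *
      volf F (tup7 v1 v2 v3 v4 (row j1 F) (row j2 F) (row j3 F)).

Definition contr4 (w : vec) (b : form4) : form3 := fun u v z => b w u v z.

Definition add3 (a b : form3) : form3 := fun u v z => a u v z + b u v z.

End G2.

(* Main.v *)
Require Import Defs.
From HB Require Import structures.
From mathcomp Require Import all_boot all_order all_algebra.
From mathcomp Require Import all_classical all_reals all_analysis.
From mathcomp Require Import perm.
From mathcomp.algebra_tactics Require Import ring lra.
Import Order.TTheory GRing.Theory Num.Theory.
Local Open Scope ring_scope.
Set Implicit Arguments. Unset Strict Implicit. Unset Printing Implicit Defensive.

(* Proof outline: in E-coordinates phi~ = phi0 + psi0(W,.,.,.), W = coords E w.
   With y = W/|W| and a+ib a cube root of 1 + i|W|, the explicit linear map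
   P = mu y^T y + a (1 - y^T y) + b J_y (J_y = cross product with y) satisfies
   P^* phi0 = phi~ (G2 identities checked by ring).  Volumes are compared via
   the 7-form (u _| phi) /\ (v _| phi) /\ phi, which equals 144 <u,v> vol
   (checked by computation with an explicit Levi-Civita symbol); this gives
   det P = (a^2+b^2)^2 = (1+|W|^2)^(2/3) and that the stabiliser of phi0 has
   determinant 1. *)

Section S.
Variable R : realType.
Notation vec := (vec R).
Definition mk7 (a1 a2 a3 a4 a5 a6 a7 : R) : vec :=
  \row_(k < 7) nth 0 [:: a1; a2; a3; a4; a5; a6; a7] k.
Lemma xmk1 a1 a2 a3 a4 a5 a6 a7 : x (mk7 a1 a2 a3 a4 a5 a6 a7) 1 = a1.
Proof. by rewrite /x mxE inordK. Qed.
Lemma xmk2 a1 a2 a3 a4 a5 a6 a7 : x (mk7 a1 a2 a3 a4 a5 a6 a7) 2 = a2.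
Proof. by rewrite /x mxE inordK. Qed.
Lemma xmk3 a1 a2 a3 a4 a5 a6 a7 : x (mk7 a1 a2 a3 a4 a5 a6 a7) 3 = a3.
Proof. by rewrite /x mxE inordK. Qed.
Lemma xmk4 a1 a2 a3 a4 a5 a6 a7 : x (mk7 a1 a2 a3 a4 a5 a6 a7) 4 = a4.
Proof. by rewrite /x mxE inordK. Qed.
Lemma xmk5 a1 a2 a3 a4 a5 a6 a7 : x (mk7 a1 a2 a3 a4 a5 a6 a7) 5 = a5.
Proof. by rewrite /x mxE inordK. Qed.
Lemma xmk6 a1 a2 a3 a4 a5 a6 a7 : x (mk7 a1 a2 a3 a4 a5 a6 a7) 6 = a6.
Proof. by rewrite /x mxE inordK. Qed.
Lemma xmk7 a1 a2 a3 a4 a5 a6 a7 : x (mk7 a1 a2 a3 a4 a5 a6 a7) 7 = a7.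
Proof. by rewrite /x mxE inordK. Qed.

Definition J (y u : vec) : vec := mk7
 (- x u 2*x y 3 + x u 3*x y 2 + x u 4*x y 5 - x u 5*x y 4 + x u 6*x y 7 - x u 7*x y 6)
 (x u 1*x y 3 - x u 3*x y 1 + x u 4*x y 6 - x u 5*x y 7 - x u 6*x y 4 + x u 7*x y 5)
 (- x u 1*x y 2 + x u 2*x y 1 + x u 4*x y 7 + x u 5*x y 6 - x u 6*x y 5 - x u 7*x y 4)
 (- x u 1*x y 5 - x u 2*x y 6 - x u 3*x y 7 + x u 5*x y 1 + x u 6*x y 2 + x u 7*x y 3)
 (x u 1*x y 4 + x u 2*x y 7 - x u 3*x y 6 - x u 4*x y 1 + x u 6*x y 3 - x u 7*x y 2)
 (- x u 1*x y 7 + x u 2*x y 4 + x u 3*x y 5 - x u 4*x y 2 - x u 5*x y 3 + x u 7*x y 1)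
 (x u 1*x y 6 - x u 2*x y 5 + x u 3*x y 4 - x u 4*x y 3 + x u 5*x y 2 - x u 6*x y 1).

Definition dot (u v : vec) : R :=
  x u 1 * x v 1 + x u 2 * x v 2 + x u 3 * x v 3 + x u 4 * x v 4
  + x u 5 * x v 5 + x u 6 * x v 6 + x u 7 * x v 7.

Definition dx4 (a b c d : nat) (w u v z : vec) : R :=
  x w a * dx3 b c d u v z - x w b * dx3 a c d u v z
  + x w c * dx3 a b d u v z - x w d * dx3 a b c u v z.

Definition psi0 (w u v z : vec) : R :=
  dx4 4 5 6 7 w u v z - dx4 2 3 6 7 w u v z - dx4 2 3 4 5 w u v z
  - dx4 1 2 4 7 w u v z - dx4 1 2 5 6 w u v z + dx4 1 3 4 6 w u v z
  - dx4 1 3 5 7 w u v z.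

Ltac xs := rewrite /phi0 /psi0 /dot /dx4 /dx3 ?(xmk1, xmk2, xmk3, xmk4, xmk5, xmk6, xmk7).

Lemma D3 (y u v w : vec) :
  phi0 (J y u) (J y v) (J y w) = - dot y y * psi0 y u v w.
Proof. rewrite /J; xs; ring. Qed.

Lemma D1 (y u v w : vec) :
  phi0 (J y u) v w = 3 * psi0 y u v w - phi0 u (J y v) w - phi0 u v (J y w).
Proof. rewrite /J; xs; ring. Qed.

Lemma M1a (y v w : vec) : phi0 y (J y v) w = - phi0 y v (J y w).
Proof. rewrite /J; xs; ring. Qed.
Lemma M1b (y u w : vec) : phi0 (J y u) y w = - phi0 u y (J y w).
Proof. rewrite /J; xs; ring. Qed.
Lemma M1c (y u v : vec) : phi0 (J y u) v y = - phi0 u (J y v) y.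
Proof. rewrite /J; xs; ring. Qed.

Definition Aform (y u v w : vec) :=
  dot u y * phi0 y v w + dot v y * phi0 u y w + dot w y * phi0 u v y.

Lemma D2 (y u v w : vec) :
  phi0 (J y u) (J y v) w = -3 * dot y y * phi0 u v w + 4 * Aform y u v w
    - phi0 (J y u) v (J y w) - phi0 u (J y v) (J y w).
Proof. rewrite /J /Aform; xs; ring. Qed.

Lemma M2a (y v w : vec) : phi0 y (J y v) (J y w) = dot y y * phi0 y v w.
Proof. rewrite /J; xs; ring. Qed.
Lemma M2b (y u w : vec) : phi0 (J y u) y (J y w) = dot y y * phi0 u y w.
Proof. rewrite /J; xs; ring. Qed.
Lemma M2c (y u v : vec) : phi0 (J y u) (J y v) y = dot y y * phi0 u v y.
Proof. rewrite /J; xs; ring. Qed.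

Lemma phi0_yy1 (y w : vec) : phi0 y y w = 0. Proof. xs; ring. Qed.
Lemma phi0_yy2 (y w : vec) : phi0 y w y = 0. Proof. xs; ring. Qed.
Lemma phi0_yy3 (y w : vec) : phi0 w y y = 0. Proof. xs; ring. Qed.

Lemma phi0_add1 (p q v w : vec) : phi0 (p + q) v w = phi0 p v w + phi0 q v w.
Proof. rewrite /phi0 /dx3 /x !mxE; ring. Qed.
Lemma phi0_add2 (p q v w : vec) : phi0 v (p + q) w = phi0 v p w + phi0 v q w.
Proof. rewrite /phi0 /dx3 /x !mxE; ring. Qed.
Lemma phi0_add3 (p q v w : vec) : phi0 v w (p + q) = phi0 v w p + phi0 v w q.
Proof. rewrite /phi0 /dx3 /x !mxE; ring. Qed.
Lemma phi0_scale1 c (p v w : vec) : phi0 (c *: p) v w = c * phi0 p v w.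
Proof. rewrite /phi0 /dx3 /x !mxE; ring. Qed.
Lemma phi0_scale2 c (p v w : vec) : phi0 v (c *: p) w = c * phi0 v p w.
Proof. rewrite /phi0 /dx3 /x !mxE; ring. Qed.
Lemma phi0_scale3 c (p v w : vec) : phi0 v w (c *: p) = c * phi0 v w p.
Proof. rewrite /phi0 /dx3 /x !mxE; ring. Qed.

Definition Pv (y : vec) (a be b : R) (u : vec) : vec :=
  a *: u + (be * dot u y) *: y + b *: J y u.

Lemma E1core (y u v w : vec) a be b :
  phi0 (Pv y a be b u) (Pv y a be b v) (Pv y a be b w) =
  (a^+3 - 3*a*b^+2*dot y y) * phi0 u v w
  + (a^+2*be + 4*a*b^+2 + be*b^+2*dot y y) * Aform y u v w
  + (3*a^+2*b - b^+3*dot y y) * psi0 y u v w.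
Proof.
rewrite /Pv !(phi0_add1, phi0_add2, phi0_add3, phi0_scale1, phi0_scale2, phi0_scale3).
rewrite !(phi0_yy1, phi0_yy2, phi0_yy3).
rewrite D3 D2 D1 M1a M1b M1c M2a M2b M2c /Aform.
ring.
Qed.
End S.


Fixpoint epsN (n : nat) (l : seq nat) : int :=
  match n, l with
  | n'.+1, a :: l' =>
      if a \in l' then 0 else (-1) ^+ a * epsN n' [seq unbump a j | j <- l']
  | _, _ => 1
  end.

Section Eps.
Variable R : realType.

Definition Rk n (k : 'I_n -> 'I_n) : 'M[R]_n := \matrix_(i, j) ((k i == j)%:R).

Lemma det_Rk n (k : 'I_n -> 'I_n) :
  \det (Rk k) = (epsN n [seq val (k i) | i <- enum 'I_n])%:~R.
Proof.
elim: n k => [|n IH] k; first by rewrite det_mx00 enum_ord0.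
rewrite (expand_det_row _ ord0) (bigD1 (k ord0)) //= big1 ?addr0; last first.
  by move=> j /negbTE hj; rewrite mxE eq_sym hj mul0r.
rewrite mxE eqxx mul1r /cofactor add0n enum_ordSl map_cons -map_comp.
set l := map _ (enum 'I_n).
rewrite [epsN _ _]/=.
case: ifP => hin.
  have [i0 _ hi0] : exists2 i0, i0 \in enum 'I_n & val (k ord0) = val (k (lift ord0 i0)).
    by apply/mapP.
  rewrite (expand_det_row _ i0) big1 ?mulr0 //.
  move=> j _; rewrite !mxE.
  have -> : k (lift ord0 i0) = k ord0 by apply: val_inj.
  by rewrite (negbTE (neq_lift _ _)) mul0r.
set k' := fun i : 'I_n => odflt i (unlift (k ord0) (k (lift ord0 i))).
have hk' : forall i, k (lift ord0 i) = lift (k ord0) (k' i).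
  move=> i; rewrite /k'; case: unliftP => [j -> //|] hk.
  have : val (k (lift ord0 i)) \in l by apply/mapP; exists i; rewrite ?mem_enum.
  by rewrite hk hin.
have -> : row' ord0 (col' (k ord0) (Rk k)) = Rk k'.
  by apply/matrixP => i j; rewrite !mxE hk' (inj_eq (@lift_inj _ _)).
rewrite IH rmorphM rmorphXn rmorphN1; congr (_ * _%:~R); congr (epsN _ _).
rewrite /l -map_comp; apply: eq_map => i /=.
by rewrite hk' /= bumpK.
Qed.

Lemma leib n (V : 'M[R]_n) (k : 'I_n -> 'I_n) :
  \sum_(s : 'S_n) (-1) ^+ s * \prod_i V (s i) (k i) = \det V * \det (Rk k).
Proof.
set B := \matrix_(i, j) V i (k j).
have hB : B = V *m (Rk k)^T.
  apply/matrixP => i j; rewrite !mxE (bigD1 (k j)) //= big1 ?addr0.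
    by rewrite !mxE eqxx mulr1.
  by move=> l hl; rewrite !mxE eq_sym (negbTE hl) mulr0.
rewrite -(det_tr (Rk k)) -det_mulmx -hB -det_tr.
apply: eq_bigr => s _; congr (_ * _); apply: eq_bigr => i _; by rewrite !mxE.
Qed.


Notation o i := (@inord 6 i).
Notation vecR := (vec R).

Definition kk (a b c d e f g : 'I_7) : 'I_7 -> 'I_7 :=
  fun i => nth a [:: a; b; c; d; e; f; g] i.
Definition eps7 (a b c d e f g : 'I_7) : R := \det (Rk (kk a b c d e f g)).

Definition N7 (C : 'I_7 -> 'I_7 -> 'I_7 -> 'I_7 -> 'I_7 -> 'I_7 -> 'I_7 -> R) : R :=
  \sum_(a < 7) \sum_(b < 7) \sum_(c < 7) \sum_(d < 7) \sum_(e < 7) \sum_(f < 7)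
  \sum_(g < 7) C a b c d e f g.

Lemma eqN7 C1 C2 : (forall a b c d e f g, C1 a b c d e f g = C2 a b c d e f g) ->
  N7 C1 = N7 C2.
Proof.
move=> h; rewrite /N7; apply: eq_bigr => a _; apply: eq_bigr => b _;
apply: eq_bigr => c _; apply: eq_bigr => d _; apply: eq_bigr => e _;
apply: eq_bigr => f _; apply: eq_bigr => g _; exact: h.
Qed.

Lemma pull1 (I J : finType) (f : I -> R) (H : I -> J -> R) :
  \sum_(s : I) f s * \sum_(j : J) H s j = \sum_(j : J) \sum_(s : I) f s * H s j.
Proof.
rewrite (eq_bigr (fun s => \sum_j f s * H s j)); first by rewrite exchange_big.
by move=> s _; rewrite big_distrr.
Qed.

Lemma pullN7 (I : finType) (fs : I -> R) H :
  \sum_(s : I) fs s * N7 (H s) =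
  N7 (fun a b c d e f g => \sum_(s : I) fs s * H s a b c d e f g).
Proof.
rewrite /N7 pull1; apply: eq_bigr => a _.
rewrite pull1; apply: eq_bigr => b _.
rewrite pull1; apply: eq_bigr => c _.
rewrite pull1; apply: eq_bigr => d _.
rewrite pull1; apply: eq_bigr => e _.
rewrite pull1; apply: eq_bigr => f _.
by rewrite pull1.
Qed.

Lemma prod7 (F : 'I_7 -> R) :
  \prod_(i < 7) F i = F (o 0) * F (o 1) * F (o 2) * F (o 3) * F (o 4) * F (o 5) * F (o 6).
Proof.
rewrite !big_ord_recl big_ord0 mulr1 !mulrA.
by congr (_ * _ * _ * _ * _ * _ * _); congr F; apply: val_inj; rewrite /= inordK.
Qed.

Lemma kk0 a b c d e f g : kk a b c d e f g (o 0) = a. Proof. by rewrite /kk inordK. Qed.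
Lemma kk1 a b c d e f g : kk a b c d e f g (o 1) = b. Proof. by rewrite /kk inordK. Qed.
Lemma kk2 a b c d e f g : kk a b c d e f g (o 2) = c. Proof. by rewrite /kk inordK. Qed.
Lemma kk3 a b c d e f g : kk a b c d e f g (o 3) = d. Proof. by rewrite /kk inordK. Qed.
Lemma kk4 a b c d e f g : kk a b c d e f g (o 4) = e. Proof. by rewrite /kk inordK. Qed.
Lemma kk5 a b c d e f g : kk a b c d e f g (o 5) = f. Proof. by rewrite /kk inordK. Qed.
Lemma kk6 a b c d e f g : kk a b c d e f g (o 6) = g. Proof. by rewrite /kk inordK. Qed.

Definition FC C (v : 'I_7 -> vecR) : R := N7 (fun a b c d e f g =>
  (v (o 0) 0 a * v (o 1) 0 b * v (o 2) 0 c * v (o 3) 0 d * v (o 4) 0 e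
   * v (o 5) 0 f * v (o 6) 0 g) * C a b c d e f g).

Definition K7 (F : ('I_7 -> vecR) -> R) (V : 'M[R]_7) : R :=
  \sum_(s : 'S_7) (-1) ^+ s * F (fun i => row (s i) V).

Lemma U2 C V : K7 (FC C) V =
  N7 (fun a b c d e f g => C a b c d e f g * (\det V * eps7 a b c d e f g)).
Proof.
rewrite /K7 /FC pullN7; apply: eqN7 => a b c d e f g.
rewrite /eps7 -leib big_distrr.
apply: eq_bigr => s _; rewrite prod7 kk0 kk1 kk2 kk3 kk4 kk5 kk6 !mxE.
by rewrite [_ * C a b c d e f g]mulrC mulrCA.
Qed.

Lemma N7_delta (p0 p1 p2 p3 p4 p5 p6 : 'I_7) C :
  N7 (fun a b c d e f g =>
   ((p0 == a)%:R * (p1 == b)%:R * (p2 == c)%:R * (p3 == d)%:R * (p4 == e)%:R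
   * (p5 == f)%:R * (p6 == g)%:R) * C a b c d e f g) = C p0 p1 p2 p3 p4 p5 p6.
Proof.
rewrite /N7.
rewrite (bigD1 p0) //= [X in _ + X]big1 ?addr0; last first.
  move=> a /negbTE ha; repeat (apply: big1 => ? _).
  by rewrite eq_sym ha !mul0r.
rewrite (bigD1 p1) //= [X in _ + X]big1 ?addr0; last first.
  move=> a /negbTE ha; repeat (apply: big1 => ? _).
  by rewrite [p1 == _]eq_sym ha !(mulr0, mul0r).
rewrite (bigD1 p2) //= [X in _ + X]big1 ?addr0; last first.
  move=> a /negbTE ha; repeat (apply: big1 => ? _).
  by rewrite [p2 == _]eq_sym ha !(mulr0, mul0r).
rewrite (bigD1 p3) //= [X in _ + X]big1 ?addr0; last first.
  move=> a /negbTE ha; repeat (apply: big1 => ? _).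
  by rewrite [p3 == _]eq_sym ha !(mulr0, mul0r).
rewrite (bigD1 p4) //= [X in _ + X]big1 ?addr0; last first.
  move=> a /negbTE ha; repeat (apply: big1 => ? _).
  by rewrite [p4 == _]eq_sym ha !(mulr0, mul0r).
rewrite (bigD1 p5) //= [X in _ + X]big1 ?addr0; last first.
  move=> a /negbTE ha; repeat (apply: big1 => ? _).
  by rewrite [p5 == _]eq_sym ha !(mulr0, mul0r).
rewrite (bigD1 p6) //= [X in _ + X]big1 ?addr0; last first.
  move=> a /negbTE ha.
  by rewrite [p6 == _]eq_sym ha !(mulr0, mul0r).
by rewrite !eqxx !mul1r.
Qed.


Lemma SWAP C :
  \sum_(s : 'S_7) (-1) ^+ s *
     C (s (o 0)) (s (o 1)) (s (o 2)) (s (o 3)) (s (o 4)) (s (o 5)) (s (o 6))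
  = N7 (fun a b c d e f g => C a b c d e f g * eps7 a b c d e f g).
Proof.
transitivity (K7 (FC C) 1).
  rewrite /K7; apply: eq_bigr => s _; congr (_ * _).
  rewrite /FC -[LHS](N7_delta (s (o 0)) (s (o 1)) (s (o 2)) (s (o 3)) (s (o 4))
     (s (o 5)) (s (o 6)) C).
  by apply: eqN7 => a b c d e f g; rewrite !mxE.
by rewrite U2 det1; apply: eqN7 => a b c d e f g; rewrite mul1r.
Qed.

Lemma detrows (M : 'M[R]_7) :
  \det M = N7 (fun a b c d e f g =>
    (M (o 0) a * M (o 1) b * M (o 2) c * M (o 3) d * M (o 4) e * M (o 5) f * M (o 6) g)
    * eps7 a b c d e f g).
Proof.
rewrite -(SWAP (fun a b c d e f g =>
    M (o 0) a * M (o 1) b * M (o 2) c * M (o 3) d * M (o 4) e * M (o 5) f * M (o 6) g)).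
by apply: eq_bigr => s _; rewrite prod7.
Qed.

End Eps.


Definition s7 (f : nat -> int) : int := f 0%N + f 1%N + f 2%N + f 3%N + f 4%N + f 5%N + f 6%N.
Definition xz (p i : nat) : int := (p == i.-1)%:R.
Definition dx3g (xu xv xw : nat -> int) (a b c : nat) : int :=
  xu a * (xv b * xw c - xv c * xw b)
  - xu b * (xv a * xw c - xv c * xw a)
  + xu c * (xv a * xw b - xv b * xw a).
Definition phiZ (p q r : nat) : int :=
  dx3g (xz p) (xz q) (xz r) 1 2 3 - dx3g (xz p) (xz q) (xz r) 1 6 7
  - dx3g (xz p) (xz q) (xz r) 5 2 7 - dx3g (xz p) (xz q) (xz r) 5 6 3
  + dx3g (xz p) (xz q) (xz r) 4 1 5 + dx3g (xz p) (xz q) (xz r) 4 2 6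
  + dx3g (xz p) (xz q) (xz r) 4 3 7.
Definition dx4g (xw xu xv xz' : nat -> int) (a b c d : nat) : int :=
  xw a * dx3g xu xv xz' b c d - xw b * dx3g xu xv xz' a c d
  + xw c * dx3g xu xv xz' a b d - xw d * dx3g xu xv xz' a b c.
Definition psiZ (p q r s : nat) : int :=
  dx4g (xz p) (xz q) (xz r) (xz s) 4 5 6 7
  - dx4g (xz p) (xz q) (xz r) (xz s) 2 3 6 7
  - dx4g (xz p) (xz q) (xz r) (xz s) 2 3 4 5
  - dx4g (xz p) (xz q) (xz r) (xz s) 1 2 4 7
  - dx4g (xz p) (xz q) (xz r) (xz s) 1 2 5 6
  + dx4g (xz p) (xz q) (xz r) (xz s) 1 3 4 6
  - dx4g (xz p) (xz q) (xz r) (xz s) 1 3 5 7.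

Definition phiTab : seq (seq (seq int)) := Eval vm_compute in
  [seq [seq [seq phiZ p q r | r <- iota 0 7] | q <- iota 0 7] | p <- iota 0 7].
Definition phiL (p q r : nat) : int := nth 0 (nth [::] (nth [::] phiTab p) q) r.
Definition psiTab : seq (seq (seq (seq int))) := Eval vm_compute in
  [seq [seq [seq [seq psiZ p q r s | s <- iota 0 7] | r <- iota 0 7] | q <- iota 0 7] | p <- iota 0 7].
Definition psiL (p q r s : nat) : int := nth 0 (nth [::] (nth [::] (nth [::] psiTab p) q) r) s.

Definition P7 (A B : nat -> nat -> int) (G : nat -> nat -> nat -> int) : int :=
  s7 (fun a => s7 (fun b => if A a b == 0 then 0 else A a b *
   s7 (fun c => s7 (fun d => if B c d == 0 then 0 else B c d *
   s7 (fun e => s7 (fun f => s7 (fun g =>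
     if G e f g == 0 then 0 else G e f g * epsN 7 [:: a; b; c; d; e; f; g]))))))).

Definition chkB : bool := all (fun i => all (fun j =>
  P7 (phiL i) (phiL j) phiL == 144 * (i == j)%:R) (iota 0 7)) (iota 0 7).
Definition chkL : bool := all (fun i => all (fun j => all (fun l =>
  P7 (phiL i) (phiL j) (psiL l) == 0) (iota 0 7)) (iota 0 7)) (iota 0 7).
Definition H3 (a b c d : nat) : int :=
  s7 (fun e => s7 (fun f => s7 (fun g =>
     if phiL e f g == 0 then 0 else phiL e f g * epsN 7 [:: a; b; c; d; e; f; g]))).
Definition chkH : bool := all (fun a => all (fun b => all (fun c => all (fun d =>
  H3 a b c d == 6 * psiL a b c d) (iota 0 7)) (iota 0 7)) (iota 0 7)) (iota 0 7).


Definition chkT : bool :=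
  all (fun p => all (fun q => all (fun r => phiL p q r == phiZ p q r) (iota 0 7)) (iota 0 7)) (iota 0 7)
  && all (fun p => all (fun q => all (fun r => all (fun t => psiL p q r t == psiZ p q r t)
       (iota 0 7)) (iota 0 7)) (iota 0 7)) (iota 0 7).

Lemma chkT_ok : chkT = true. Proof. vm_compute. reflexivity. Qed.
Lemma chkB_ok : chkB = true. Proof. vm_compute. reflexivity. Qed.
Lemma chkL_ok : chkL = true. Proof. vm_compute. reflexivity. Qed.
Lemma chkH_ok : chkH = true. Proof. vm_compute. reflexivity. Qed.

Lemma phiLE p q r : (p < 7)%N -> (q < 7)%N -> (r < 7)%N -> phiL p q r = phiZ p q r.
Proof.
move=> hp hq hr; move: chkT_ok => /andP [h _].
move/allP: h => /(_ p); rewrite mem_iota hp => /(_ isT) /allP /(_ q).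
rewrite mem_iota hq => /(_ isT) /allP /(_ r); rewrite mem_iota hr => /(_ isT).
by move/eqP.
Qed.

Lemma psiLE p q r t : (p < 7)%N -> (q < 7)%N -> (r < 7)%N -> (t < 7)%N ->
  psiL p q r t = psiZ p q r t.
Proof.
move=> hp hq hr ht; move: chkT_ok => /andP [_ h].
move/allP: h => /(_ p); rewrite mem_iota hp => /(_ isT) /allP /(_ q).
rewrite mem_iota hq => /(_ isT) /allP /(_ r); rewrite mem_iota hr => /(_ isT).
move/allP => /(_ t); rewrite mem_iota ht => /(_ isT).
by move/eqP.
Qed.

Lemma chkB_E i j : (i < 7)%N -> (j < 7)%N ->
  P7 (phiL i) (phiL j) phiL = 144 * (i == j)%:R.
Proof.
move=> hi hj; move/allP: chkB_ok => /(_ i); rewrite mem_iota hi => /(_ isT).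
by move/allP => /(_ j); rewrite mem_iota hj => /(_ isT) /eqP.
Qed.

Lemma chkL_E i j l : (i < 7)%N -> (j < 7)%N -> (l < 7)%N ->
  P7 (phiL i) (phiL j) (psiL l) = 0.
Proof.
move=> hi hj hl; move/allP: chkL_ok => /(_ i); rewrite mem_iota hi => /(_ isT).
move/allP => /(_ j); rewrite mem_iota hj => /(_ isT).
by move/allP => /(_ l); rewrite mem_iota hl => /(_ isT) /eqP.
Qed.

Lemma chkH_E a b c d : (a < 7)%N -> (b < 7)%N -> (c < 7)%N -> (d < 7)%N ->
  H3 a b c d = 6 * psiL a b c d.
Proof.
move=> ha hb hc hd; move/allP: chkH_ok => /(_ a); rewrite mem_iota ha => /(_ isT).
move/allP => /(_ b); rewrite mem_iota hb => /(_ isT).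
move/allP => /(_ c); rewrite mem_iota hc => /(_ isT).
by move/allP => /(_ d); rewrite mem_iota hd => /(_ isT) /eqP.
Qed.

Definition N7z (Cz : nat -> nat -> nat -> nat -> nat -> nat -> nat -> int) : int :=
  s7 (fun a => s7 (fun b => s7 (fun c => s7 (fun d => s7 (fun e => s7 (fun f =>
  s7 (fun g => Cz a b c d e f g))))))).

Lemma s7_ext f g : (forall n, f n = g n) -> s7 f = s7 g.
Proof. by move=> h; rewrite /s7 !h. Qed.
Lemma s7_mull k f : s7 (fun n => k * f n) = k * s7 f.
Proof. by rewrite /s7 !mulrDr. Qed.
Lemma lazyE (x y : int) : (if x == 0 then 0 else x * y) = x * y.
Proof. by case: eqP => [->|]; rewrite ?mul0r. Qed.

Lemma P7E A B G : P7 A B G = N7z (fun a b c d e f g =>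
  A a b * (B c d * (G e f g * epsN 7 [:: a; b; c; d; e; f; g]))).
Proof.
rewrite /P7 /N7z; apply: s7_ext => a; apply: s7_ext => b.
rewrite lazyE -s7_mull; apply: s7_ext => c; rewrite -s7_mull; apply: s7_ext => d.
rewrite lazyE mulrA -s7_mull; apply: s7_ext => e; rewrite -s7_mull; apply: s7_ext => f.
rewrite -s7_mull; apply: s7_ext => g; by rewrite lazyE !mulrA.
Qed.

Lemma H3E a b c d : H3 a b c d = s7 (fun e => s7 (fun f => s7 (fun g =>
  phiL e f g * epsN 7 [:: a; b; c; d; e; f; g]))).
Proof.
rewrite /H3; apply: s7_ext => e; apply: s7_ext => f; apply: s7_ext => g.
by rewrite lazyE.
Qed.


Section L.
Variable R : realType.
Notation vec := (vec R).
Notation o i := (@inord 6 i).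
Definition dl (i : 'I_7) : vec := delta_mx 0 i.

Lemma xdelta (i : 'I_7) k : (k.-1 < 7)%N -> x (dl i) k = ((i : nat) == k.-1)%:R.
Proof.
move=> hk; rewrite /x /dl mxE eqxx /=; congr (_%:R).
by rewrite -(inj_eq val_inj) /= inordK // eq_sym.
Qed.

Lemma phi0_dl (a b c : 'I_7) : phi0 (dl a) (dl b) (dl c) = (phiZ a b c)%:~R.
Proof.
rewrite /phi0 /dx3 !xdelta // /phiZ /dx3g /xz.
ring.
Qed.

Lemma psi0_dl (a b c d : 'I_7) : psi0 (dl a) (dl b) (dl c) (dl d) = (psiZ a b c d)%:~R.
Proof.
rewrite /psi0 /dx4 /dx3 !xdelta // /psiZ /dx4g /dx3g /xz.
ring.
Qed.

Lemma lin_sum (f : vec -> R) : (forall p q, f (p + q) = f p + f q) ->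
  (forall c p, f (c *: p) = c * f p) ->
  forall u, f u = \sum_(i < 7) u 0 i * f (dl i).
Proof.
move=> hadd hs u.
have f0 : f 0 = 0 by rewrite -[0 : vec](scale0r 0) hs mul0r.
rewrite {1}(row_sum_delta u).
apply: (big_ind2 (fun p r => f p = r)).
- exact: f0.
- by move=> p1 r1 p2 r2 <- <-; rewrite hadd.
- by move=> i _; rewrite hs.
Qed.

Ltac psl := rewrite /psi0 /dx4 /dx3 /x !mxE; ring.
Lemma psi0_add1 (p q u v w : vec) : psi0 (p + q) u v w = psi0 p u v w + psi0 q u v w. Proof. psl. Qed.
Lemma psi0_add2 (p q u v w : vec) : psi0 u (p + q) v w = psi0 u p v w + psi0 u q v w. Proof. psl. Qed.
Lemma psi0_add3 (p q u v w : vec) : psi0 u v (p + q) w = psi0 u v p w + psi0 u v q w. Proof. psl. Qed.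
Lemma psi0_add4 (p q u v w : vec) : psi0 u v w (p + q) = psi0 u v w p + psi0 u v w q. Proof. psl. Qed.
Lemma psi0_sc1 c (p u v w : vec) : psi0 (c *: p) u v w = c * psi0 p u v w. Proof. psl. Qed.
Lemma psi0_sc2 c (p u v w : vec) : psi0 u (c *: p) v w = c * psi0 u p v w. Proof. psl. Qed.
Lemma psi0_sc3 c (p u v w : vec) : psi0 u v (c *: p) w = c * psi0 u v p w. Proof. psl. Qed.
Lemma psi0_sc4 c (p u v w : vec) : psi0 u v w (c *: p) = c * psi0 u v w p. Proof. psl. Qed.

Lemma phi0_e1 u v w : phi0 u v w = \sum_(i < 7) u 0 i * phi0 (dl i) v w.
Proof. exact: (@lin_sum (fun p => phi0 p v w) (fun p q => phi0_add1 p q v w) (fun c p => phi0_scale1 c p v w) u). Qed.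
Lemma phi0_e2 u v w : phi0 v u w = \sum_(i < 7) u 0 i * phi0 v (dl i) w.
Proof. exact: (@lin_sum (fun p => phi0 v p w) (fun p q => phi0_add2 p q v w) (fun c p => phi0_scale2 c p v w) u). Qed.
Lemma phi0_e3 u v w : phi0 v w u = \sum_(i < 7) u 0 i * phi0 v w (dl i).
Proof. exact: (@lin_sum (fun p => phi0 v w p) (fun p q => phi0_add3 p q v w) (fun c p => phi0_scale3 c p v w) u). Qed.
Lemma psi0_e1 p u v w : psi0 p u v w = \sum_(i < 7) p 0 i * psi0 (dl i) u v w.
Proof. exact: (@lin_sum (fun p => psi0 p u v w) (fun p q => psi0_add1 p q u v w) (fun c p => psi0_sc1 c p u v w) p). Qed.
Lemma psi0_e2 p u v w : psi0 u p v w = \sum_(i < 7) p 0 i * psi0 u (dl i) v w.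
Proof. exact: (@lin_sum (fun p => psi0 u p v w) (fun p q => psi0_add2 p q u v w) (fun c p => psi0_sc2 c p u v w) p). Qed.
Lemma psi0_e3 p u v w : psi0 u v p w = \sum_(i < 7) p 0 i * psi0 u v (dl i) w.
Proof. exact: (@lin_sum (fun p => psi0 u v p w) (fun p q => psi0_add3 p q u v w) (fun c p => psi0_sc3 c p u v w) p). Qed.
Lemma psi0_e4 p u v w : psi0 u v w p = \sum_(i < 7) p 0 i * psi0 u v w (dl i).
Proof. exact: (@lin_sum (fun p => psi0 u v w p) (fun p q => psi0_add4 p q u v w) (fun c p => psi0_sc4 c p u v w) p). Qed.

Lemma bil_e (al : vec -> vec -> R) :
  (forall u v, al u v = \sum_(i < 7) u 0 i * al (dl i) v) ->
  (forall u v, al v u = \sum_(i < 7) u 0 i * al v (dl i)) ->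
  forall p q, al p q = \sum_(a < 7) \sum_(b < 7) p 0 a * q 0 b * al (dl a) (dl b).
Proof.
move=> h1 h2 p q; rewrite h1; apply: eq_bigr => a _; rewrite h2 mulr_sumr.
by apply: eq_bigr => b _; rewrite mulrA.
Qed.

Lemma tril_e (ga : vec -> vec -> vec -> R) :
  (forall u v w, ga u v w = \sum_(i < 7) u 0 i * ga (dl i) v w) ->
  (forall u v w, ga v u w = \sum_(i < 7) u 0 i * ga v (dl i) w) ->
  (forall u v w, ga v w u = \sum_(i < 7) u 0 i * ga v w (dl i)) ->
  forall p q r, ga p q r = \sum_(e < 7) \sum_(f < 7) \sum_(g < 7)
     p 0 e * q 0 f * r 0 g * ga (dl e) (dl f) (dl g).
Proof.
move=> h1 h2 h3 p q r; rewrite h1; apply: eq_bigr => e _; rewrite h2 mulr_sumr.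
apply: eq_bigr => f _; rewrite h3 !mulr_sumr.
by apply: eq_bigr => g _; rewrite !mulrA.
Qed.

Lemma F_FC (al be : vec -> vec -> R) (ga : vec -> vec -> vec -> R)
  (ha : forall p q, al p q = \sum_(a < 7) \sum_(b < 7) p 0 a * q 0 b * al (dl a) (dl b))
  (hb : forall p q, be p q = \sum_(a < 7) \sum_(b < 7) p 0 a * q 0 b * be (dl a) (dl b))
  (hg : forall p q r, ga p q r = \sum_(e < 7) \sum_(f < 7) \sum_(g < 7)
     p 0 e * q 0 f * r 0 g * ga (dl e) (dl f) (dl g)) (v : 'I_7 -> vec) :
  al (v (o 0)) (v (o 1)) * be (v (o 2)) (v (o 3)) * ga (v (o 4)) (v (o 5)) (v (o 6))
  = FC (fun a b c d e f g => al (dl a) (dl b) * be (dl c) (dl d) * ga (dl e) (dl f) (dl g)) v.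
Proof.
rewrite ha hb hg /FC /N7 -mulrA mulr_suml; apply: eq_bigr => a _.
rewrite mulr_suml; apply: eq_bigr => b _.
rewrite mulr_suml mulr_sumr; apply: eq_bigr => c _.
rewrite mulr_suml mulr_sumr; apply: eq_bigr => d _.
rewrite !mulr_sumr; apply: eq_bigr => e _.
rewrite !mulr_sumr; apply: eq_bigr => f _.
rewrite !mulr_sumr; apply: eq_bigr => g _.
ring.
Qed.

Lemma N7_mull (k : R) (C : 'I_7 -> 'I_7 -> 'I_7 -> 'I_7 -> 'I_7 -> 'I_7 -> 'I_7 -> R) : N7 (fun a b c d e f g => k * C a b c d e f g) = k * N7 C.
Proof.
rewrite /N7 mulr_sumr; apply: eq_bigr => a _.
rewrite mulr_sumr; apply: eq_bigr => b _.
rewrite mulr_sumr; apply: eq_bigr => c _.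
rewrite mulr_sumr; apply: eq_bigr => d _.
rewrite mulr_sumr; apply: eq_bigr => e _.
rewrite mulr_sumr; apply: eq_bigr => f _.
by rewrite mulr_sumr.
Qed.

Lemma N7_sum (I : finType) (H : I -> 'I_7 -> 'I_7 -> 'I_7 -> 'I_7 -> 'I_7 -> 'I_7 -> 'I_7 -> R) :
  N7 (fun a b c d e f g => \sum_(i : I) H i a b c d e f g) = \sum_(i : I) N7 (H i).
Proof.
transitivity (N7 (fun a b c d e f g => \sum_(i : I) 1 * H i a b c d e f g)).
  by apply: eqN7 => *; apply: eq_bigr => i _; rewrite mul1r.
by rewrite -pullN7; apply: eq_bigr => i _; rewrite mul1r.
Qed.

Lemma K7_val (al be : vec -> vec -> R) (ga : vec -> vec -> vec -> R)
  (ha : forall p q, al p q = \sum_(a < 7) \sum_(b < 7) p 0 a * q 0 b * al (dl a) (dl b))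
  (hb : forall p q, be p q = \sum_(a < 7) \sum_(b < 7) p 0 a * q 0 b * be (dl a) (dl b))
  (hg : forall p q r, ga p q r = \sum_(e < 7) \sum_(f < 7) \sum_(g < 7)
     p 0 e * q 0 f * r 0 g * ga (dl e) (dl f) (dl g)) V :
  K7 (fun v => al (v (o 0)) (v (o 1)) * be (v (o 2)) (v (o 3)) * ga (v (o 4)) (v (o 5)) (v (o 6))) V
  = \det V * N7 (fun a b c d e f g =>
      (al (dl a) (dl b) * be (dl c) (dl d) * ga (dl e) (dl f) (dl g)) * eps7 R a b c d e f g).
Proof.
transitivity (K7 (FC (fun a b c d e f g =>
   al (dl a) (dl b) * be (dl c) (dl d) * ga (dl e) (dl f) (dl g))) V).
  by rewrite /K7; apply: eq_bigr => s _; congr (_ * _); exact: (F_FC ha hb hg).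
rewrite U2 -N7_mull; apply: eqN7 => a b c d e f g.
by rewrite mulrCA.
Qed.

End L.


Section M.
Variable R : realType.
Notation vec := (vec R).
Notation o i := (@inord 6 i).
Local Notation dl := (@dl R).

Lemma sum7R (F : 'I_7 -> R) :
  \sum_(i < 7) F i = F (o 0) + F (o 1) + F (o 2) + F (o 3) + F (o 4) + F (o 5) + F (o 6).
Proof.
rewrite !big_ord_recl big_ord0 addr0 !addrA.
by congr (_ + _ + _ + _ + _ + _ + _); congr F; apply: val_inj; rewrite /= inordK.
Qed.

Lemma sum7_cast (G : 'I_7 -> R) (H : nat -> int) :
  (forall i : 'I_7, G i = (H i)%:~R) -> \sum_(i < 7) G i = (s7 H)%:~R.
Proof. by move=> h; rewrite sum7R /s7 !intrD !h !inordK. Qed.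

Lemma N7_cast (Cz : nat -> nat -> nat -> nat -> nat -> nat -> nat -> int) :
  N7 (fun a b c d e f g => (Cz a b c d e f g)%:~R : R) = (N7z Cz)%:~R.
Proof.
rewrite /N7 /N7z; apply: sum7_cast => a; apply: sum7_cast => b; apply: sum7_cast => c.
apply: sum7_cast => d; apply: sum7_cast => e; apply: sum7_cast => f.
by apply: sum7_cast => g.
Qed.

Lemma eps7_cast (a b c d e f g : 'I_7) :
  eps7 R a b c d e f g = (epsN 7 [:: (a : nat); (b : nat); (c : nat); (d : nat); (e : nat); (f : nat); (g : nat)])%:~R.
Proof.
rewrite /eps7 det_Rk /kk; congr ((epsN _ _)%:~R).
by rewrite (map_comp (fun n => val (nth a [:: a; b; c; d; e; f; g] n)) val) val_enum_ord.
Qed.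

Lemma NT (i j : 'I_7) (ga : vec -> vec -> vec -> R) (gz : nat -> nat -> nat -> int)
  (hg : forall e f g : 'I_7, ga (dl e) (dl f) (dl g) = (gz e f g)%:~R) :
  N7 (fun a b c d e f g => (phi0 (dl i) (dl a) (dl b) * phi0 (dl j) (dl c) (dl d)
        * ga (dl e) (dl f) (dl g)) * eps7 R a b c d e f g)
  = (P7 (phiL i) (phiL j) gz)%:~R.
Proof.
rewrite P7E -N7_cast; apply: eqN7 => a b c d e f g.
rewrite !phi0_dl hg eps7_cast -!phiLE // !intrM.
ring.
Qed.

Lemma dotE (u v : vec) : dot u v = \sum_(i < 7) u 0 i * v 0 i.
Proof. by rewrite sum7R /dot /x. Qed.

Definition Bq (x y : vec) : R :=
  N7 (fun a b c d e f g => (phi0 x (dl a) (dl b) * phi0 y (dl c) (dl d)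
        * phi0 (dl e) (dl f) (dl g)) * eps7 R a b c d e f g).

Lemma expand2 (A B : 'I_7 -> R) (c d : R) :
  (\sum_(i < 7) A i) * (\sum_(j < 7) B j) * c * d
  = \sum_(i < 7) \sum_(j < 7) A i * B j * (c * d).
Proof.
rewrite -!mulrA mulr_suml; apply: eq_bigr => i _.
rewrite mulr_suml mulr_sumr; apply: eq_bigr => j _.
by rewrite !mulrA.
Qed.

Lemma Bq_val (x y : vec) : Bq x y = 144 * dot x y.
Proof.
rewrite /Bq.
transitivity (N7 (fun a b c d e f g => \sum_(i < 7) \sum_(j < 7)
   (x 0 i * phi0 (dl i) (dl a) (dl b)) * (y 0 j * phi0 (dl j) (dl c) (dl d)) *
   (phi0 (dl e) (dl f) (dl g) * eps7 R a b c d e f g))).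
  by apply: eqN7 => a b c d e f g; rewrite (phi0_e1 x) (phi0_e1 y) expand2.
rewrite N7_sum (eq_bigr (fun i => \sum_(j < 7) x 0 i * y 0 j * (144 * ((i : nat) == j)%:R)%:~R)).
  rewrite dotE mulr_sumr; apply: eq_bigr => i _.
  rewrite (bigD1 i) //= big1 ?addr0.
    by rewrite eqxx intrM mulr1; ring.
  move=> j hj; rewrite (_ : ((i : nat) == j) = false) ?mulr0 ?mul0r ?mulr0 //.
  by apply/negbTE; rewrite eq_sym; exact: hj.
move=> i _; rewrite N7_sum; apply: eq_bigr => j _.
rewrite -chkB_E // -(NT i j (ga := fun p q r => phi0 p q r)) => [|e f g]; last first.
  by rewrite phi0_dl phiLE.
rewrite -N7_mull; apply: eqN7 => a b c d e f g; ring.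
Qed.

Lemma expand2' (A B : 'I_7 -> R) (e : R) :
  (\sum_(i < 7) A i) * (\sum_(j < 7) B j) * e = \sum_(i < 7) \sum_(j < 7) A i * B j * e.
Proof.
rewrite -mulrA mulr_suml; apply: eq_bigr => i _.
rewrite mulr_suml mulr_sumr; apply: eq_bigr => j _.
by rewrite !mulrA.
Qed.

Lemma expand3 (A B C : 'I_7 -> R) (d : R) :
  (\sum_(i < 7) A i) * (\sum_(j < 7) B j) * (\sum_(l < 7) C l) * d
  = \sum_(l < 7) \sum_(i < 7) \sum_(j < 7) A i * B j * (C l * d).
Proof.
have -> : (\sum_(i < 7) A i) * (\sum_(j < 7) B j) * (\sum_(l < 7) C l) * d
  = (\sum_(l < 7) C l) * ((\sum_(i < 7) A i) * (\sum_(j < 7) B j) * d) by ring.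
rewrite mulr_suml; apply: eq_bigr => l _.
have -> : C l * ((\sum_(i < 7) A i) * (\sum_(j < 7) B j) * d)
  = (\sum_(i < 7) A i) * (\sum_(j < 7) B j) * (C l * d) by ring.
by rewrite expand2'.
Qed.

Lemma L_val (W : vec) :
  N7 (fun a b c d e f g => (phi0 W (dl a) (dl b) * phi0 W (dl c) (dl d)
        * psi0 W (dl e) (dl f) (dl g)) * eps7 R a b c d e f g) = 0.
Proof.
transitivity (N7 (fun a b c d e f g => \sum_(l < 7) \sum_(i < 7) \sum_(j < 7)
   (W 0 i * phi0 (dl i) (dl a) (dl b)) * (W 0 j * phi0 (dl j) (dl c) (dl d)) *
   (W 0 l * psi0 (dl l) (dl e) (dl f) (dl g) * eps7 R a b c d e f g))).
  apply: eqN7 => a b c d e f g.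
  by rewrite (phi0_e1 W (dl a)) (phi0_e1 W (dl c)) (psi0_e1 W) expand3.
rewrite N7_sum big1 // => l _; rewrite N7_sum big1 // => i _; rewrite N7_sum big1 // => j _.
transitivity (N7 (fun a b c d e f g => (W 0 i * W 0 j * W 0 l) *
   ((phi0 (dl i) (dl a) (dl b) * phi0 (dl j) (dl c) (dl d) * psi0 (dl l) (dl e) (dl f) (dl g))
    * eps7 R a b c d e f g))).
  by apply: eqN7 => a b c d e f g; ring.
rewrite N7_mull (NT i j (ga := fun p q r => psi0 (dl l) p q r) (gz := psiL l)).
  by rewrite chkL_E // mulr0.
by move=> e f g; rewrite psi0_dl psiLE.
Qed.

End M.


Section H.
Variable R : realType.
Notation vec := (vec R).
Notation o i := (@inord 6 i).
Local Notation dl := (@dl R).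

Definition N4 (H : 'I_7 -> 'I_7 -> 'I_7 -> 'I_7 -> R) : R :=
  \sum_(a < 7) \sum_(b < 7) \sum_(c < 7) \sum_(d < 7) H a b c d.

Lemma eqN4 H1 H2 : (forall a b c d, H1 a b c d = H2 a b c d) -> N4 H1 = N4 H2.
Proof.
move=> h; rewrite /N4; apply: eq_bigr => a _; apply: eq_bigr => b _;
apply: eq_bigr => c _; apply: eq_bigr => d _; exact: h.
Qed.

Lemma pullN4 (I : finType) (fs : I -> R) (H : I -> 'I_7 -> 'I_7 -> 'I_7 -> 'I_7 -> R) :
  \sum_(s : I) fs s * N4 (H s) = N4 (fun a b c d => \sum_(s : I) fs s * H s a b c d).
Proof.
rewrite /N4 pull1; apply: eq_bigr => a _.
rewrite pull1; apply: eq_bigr => b _.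
rewrite pull1; apply: eq_bigr => c _.
by rewrite pull1.
Qed.

Lemma N4_sum (I : finType) (H : I -> 'I_7 -> 'I_7 -> 'I_7 -> 'I_7 -> R) :
  \sum_(s : I) N4 (H s) = N4 (fun a b c d => \sum_(s : I) H s a b c d).
Proof.
transitivity (\sum_(s : I) 1 * N4 (H s)); first by apply: eq_bigr => s _; rewrite mul1r.
by rewrite pullN4; apply: eqN4 => a b c d; apply: eq_bigr => s _; rewrite mul1r.
Qed.

Lemma N4_mull (k : R) H : N4 (fun a b c d => k * H a b c d) = k * N4 H.
Proof.
rewrite /N4 mulr_sumr; apply: eq_bigr => a _.
rewrite mulr_sumr; apply: eq_bigr => b _.
rewrite mulr_sumr; apply: eq_bigr => c _.
by rewrite mulr_sumr.
Qed.

Lemma psi0_e (p q r t : vec) : psi0 p q r t =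
  N4 (fun a b c d => p 0 a * q 0 b * r 0 c * t 0 d * psi0 (dl a) (dl b) (dl c) (dl d)).
Proof.
rewrite /N4 psi0_e1; apply: eq_bigr => a _.
rewrite psi0_e2 mulr_sumr; apply: eq_bigr => b _.
rewrite psi0_e3 !mulr_sumr; apply: eq_bigr => c _.
rewrite psi0_e4 !mulr_sumr; apply: eq_bigr => d _.
by rewrite !mulrA.
Qed.

Lemma collapse3 (X : R) (j1 j2 j3 : 'I_7) (H : 'I_7 -> 'I_7 -> 'I_7 -> R) :
  \sum_(e < 7) \sum_(f < 7) \sum_(g < 7)
    (X * (e == j1)%:R * (f == j2)%:R * (g == j3)%:R) * H e f g = X * H j1 j2 j3.
Proof.
rewrite (bigD1 j1) //= [X in _ + X]big1 ?addr0; last first.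
  move=> e /negbTE he; apply: big1 => f _; apply: big1 => g _.
  by rewrite he !(mulr0, mul0r).
rewrite (bigD1 j2) //= [X in _ + X]big1 ?addr0; last first.
  move=> f /negbTE hf; apply: big1 => g _.
  by rewrite hf !(mulr0, mul0r).
rewrite (bigD1 j3) //= [X in _ + X]big1 ?addr0; last first.
  by move=> g /negbTE hg; rewrite hg !(mulr0, mul0r).
by rewrite !eqxx !mulr1.
Qed.

Lemma tup7_0 (v1 v2 v3 v4 v5 v6 v7 : vec) : tup7 v1 v2 v3 v4 v5 v6 v7 (o 0) = v1.
Proof. by rewrite /tup7 inordK. Qed.
Lemma tup7_1 (v1 v2 v3 v4 v5 v6 v7 : vec) : tup7 v1 v2 v3 v4 v5 v6 v7 (o 1) = v2.
Proof. by rewrite /tup7 inordK. Qed.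
Lemma tup7_2 (v1 v2 v3 v4 v5 v6 v7 : vec) : tup7 v1 v2 v3 v4 v5 v6 v7 (o 2) = v3.
Proof. by rewrite /tup7 inordK. Qed.
Lemma tup7_3 (v1 v2 v3 v4 v5 v6 v7 : vec) : tup7 v1 v2 v3 v4 v5 v6 v7 (o 3) = v4.
Proof. by rewrite /tup7 inordK. Qed.
Lemma tup7_4 (v1 v2 v3 v4 v5 v6 v7 : vec) : tup7 v1 v2 v3 v4 v5 v6 v7 (o 4) = v5.
Proof. by rewrite /tup7 inordK. Qed.
Lemma tup7_5 (v1 v2 v3 v4 v5 v6 v7 : vec) : tup7 v1 v2 v3 v4 v5 v6 v7 (o 5) = v6.
Proof. by rewrite /tup7 inordK. Qed.
Lemma tup7_6 (v1 v2 v3 v4 v5 v6 v7 : vec) : tup7 v1 v2 v3 v4 v5 v6 v7 (o 6) = v7.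
Proof. by rewrite /tup7 inordK. Qed.

Lemma det_tup (r : 'I_7 -> vec) : \det (\matrix_(i, j) r i 0 j) =
  N7 (fun a b c d e f g => (r (o 0) 0 a * r (o 1) 0 b * r (o 2) 0 c * r (o 3) 0 d
     * r (o 4) 0 e * r (o 5) 0 f * r (o 6) 0 g) * eps7 R a b c d e f g).
Proof. by rewrite detrows; apply: eqN7 => *; rewrite !mxE. Qed.

Lemma dlE (j e : 'I_7) : dl j 0 e = (e == j)%:R.
Proof. by rewrite /dl mxE eqxx. Qed.

Lemma crow (E : 'M[R]_7) (j : 'I_7) : E \in unitmx -> coords E (row j E) = dl j.
Proof. by move=> hE; rewrite /coords -row_mul mulmxV // row1. Qed.

Lemma H3_cast (a b c d : 'I_7) :
  \sum_(j1 < 7) \sum_(j2 < 7) \sum_(j3 < 7)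
    phi0 (dl j1) (dl j2) (dl j3) * eps7 R a b c d j1 j2 j3
  = 6 * psi0 (dl a) (dl b) (dl c) (dl d).
Proof.
have -> : 6 * psi0 (dl a) (dl b) (dl c) (dl d) = (H3 a b c d)%:~R.
  by rewrite chkH_E // psiLE // intrM mulrz_nat psi0_dl.
rewrite H3E; apply: sum7_cast => e; apply: sum7_cast => f; apply: sum7_cast => g.
by rewrite phi0_dl eps7_cast -phiLE // intrM.
Qed.

Lemma hodge_psi (phio : form3 R) (E : 'M[R]_7) (hE : adapted phio E) (w u v z : vec) :
  hodge3 E phio w u v z = psi0 (coords E w) (coords E u) (coords E v) (coords E z).
Proof.
case: hE => hEu hphi.

rewrite /hodge3.
transitivity (6%:R^-1 * \sum_(j1 < 7) \sum_(j2 < 7) \sum_(j3 < 7)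
   phi0 (dl j1) (dl j2) (dl j3) *
   N4 (fun a b c d => coords E w 0 a * coords E u 0 b * coords E v 0 c * coords E z 0 d * eps7 R a b c d j1 j2 j3)).
  congr (_ * _); apply: eq_bigr => j1 _; apply: eq_bigr => j2 _; apply: eq_bigr => j3 _.
  have c1 : coords E (row j1 E) = dl j1 by exact: crow.
  have c2 : coords E (row j2 E) = dl j2 by exact: crow.
  have c3 : coords E (row j3 E) = dl j3 by exact: crow.
  have -> : phio (row j1 E) (row j2 E) (row j3 E) = phi0 (dl j1) (dl j2) (dl j3).
    by rewrite hphi c1 c2 c3.
  congr (_ * _).
  rewrite /volf det_tup /N7 /N4; apply: eq_bigr => a _; apply: eq_bigr => b _.
  apply: eq_bigr => c _; apply: eq_bigr => d _.
  rewrite -collapse3; apply: eq_bigr => e _; apply: eq_bigr => f _; apply: eq_bigr => g _.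
  by rewrite tup7_0 tup7_1 tup7_2 tup7_3 tup7_4 tup7_5 tup7_6 c1 c2 c3 !dlE.
rewrite (eq_bigr (fun j1 => N4 (fun a b c d => \sum_(j2 < 7) \sum_(j3 < 7)
   phi0 (dl j1) (dl j2) (dl j3) * (coords E w 0 a * coords E u 0 b * coords E v 0 c * coords E z 0 d * eps7 R a b c d j1 j2 j3)))).
  rewrite N4_sum psi0_e -N4_mull; apply: eqN4 => a b c d.
  transitivity (6%:R^-1 * (coords E w 0 a * coords E u 0 b * coords E v 0 c * coords E z 0 d * \sum_(j1 < 7) \sum_(j2 < 7) \sum_(j3 < 7)
     phi0 (dl j1) (dl j2) (dl j3) * eps7 R a b c d j1 j2 j3)).
    congr (_ * _); rewrite mulr_sumr; apply: eq_bigr => j1 _.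
    rewrite mulr_sumr; apply: eq_bigr => j2 _.
    rewrite mulr_sumr; apply: eq_bigr => j3 _.
    by rewrite mulrCA.
  by rewrite H3_cast mulrCA mulKf // pnatr_eq0.
move=> j1 _.
rewrite (eq_bigr (fun j2 => N4 (fun a b c d => \sum_(j3 < 7)
   phi0 (dl j1) (dl j2) (dl j3) * (coords E w 0 a * coords E u 0 b * coords E v 0 c * coords E z 0 d * eps7 R a b c d j1 j2 j3)))).
  by rewrite N4_sum.
by move=> j2 _; rewrite pullN4.
Qed.

End H.


Section F.
Variable R : realType.
Notation vec := (vec R).
Notation o i := (@inord 6 i).
Local Notation dl := (@dl R).

Lemma phi0_bil (x : vec) : forall p q, phi0 x p q =
  \sum_(a < 7) \sum_(b < 7) p 0 a * q 0 b * phi0 x (dl a) (dl b).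
Proof.
apply: (@bil_e R (fun p q => phi0 x p q)) => u v; [exact: phi0_e2 | exact: phi0_e3].
Qed.

Lemma phi0_tril : forall p q r, phi0 p q r = \sum_(e < 7) \sum_(f < 7) \sum_(g < 7)
     p 0 e * q 0 f * r 0 g * phi0 (dl e) (dl f) (dl g).
Proof.
apply: (@tril_e R (fun p q r => phi0 p q r)) => u v w; [exact: phi0_e1 | exact: phi0_e2 | exact: phi0_e3].
Qed.

Lemma psi0_tril (W : vec) : forall p q r, psi0 W p q r = \sum_(e < 7) \sum_(f < 7) \sum_(g < 7)
     p 0 e * q 0 f * r 0 g * psi0 W (dl e) (dl f) (dl g).
Proof.
apply: (@tril_e R (fun p q r => psi0 W p q r)) => u v w; [exact: psi0_e2 | exact: psi0_e3 | exact: psi0_e4].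
Qed.

Definition Fphi (x y : vec) (v : 'I_7 -> vec) : R :=
  phi0 x (v (o 0)) (v (o 1)) * phi0 y (v (o 2)) (v (o 3)) * phi0 (v (o 4)) (v (o 5)) (v (o 6)).

Lemma K7_Fphi (x y : vec) V : K7 (Fphi x y) V = \det V * Bq x y.
Proof.
exact: (@K7_val R (fun p q => phi0 x p q) (fun p q => phi0 y p q) (fun p q r => phi0 p q r)
   (phi0_bil x) (phi0_bil y) phi0_tril V).
Qed.

Lemma dot_row (A B : 'M[R]_7) (i j : 'I_7) :
  dot (dl i *m A) (dl j *m B) = (A *m B^T) i j.
Proof.
rewrite dotE mxE; apply: eq_bigr => k _.
by rewrite /dl -!rowE !mxE.
Qed.

Lemma dot_dl (i j : 'I_7) : dot (dl i) (dl j) = (i == j)%:R.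
Proof. by have := dot_row 1%:M 1%:M i j; rewrite !mulmx1 trmx1 mulmx1 mxE. Qed.

Lemma dot_ge0 (p : vec) : 0 <= dot p p.
Proof. by rewrite /dot -!expr2; repeat apply: addr_ge0; apply: sqr_ge0. Qed.

Lemma stab_det (A : 'M[R]_7) :
  (forall u v z : vec, phi0 (u *m A) (v *m A) (z *m A) = phi0 u v z) -> \det A = 1.
Proof.
move=> hA.
have key : forall x y : vec, \det A * (144 * dot (x *m A) (y *m A)) = 144 * dot x y.
  move=> x y; rewrite -!Bq_val -K7_Fphi.
  transitivity (K7 (Fphi x y) 1%:M); last by rewrite K7_Fphi det1 mul1r.
  rewrite /K7; apply: eq_bigr => s _; congr (_ * _).
  have hr : forall i, row i A = row i 1%:M *m A by move=> i; rewrite row1 rowE.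
  by rewrite /Fphi !hr !hA.
have hM : \det A *: (A *m A^T) = 1%:M.
  apply/matrixP => i j; rewrite [LHS]mxE [RHS]mxE.
  have := key (dl i) (dl j); rewrite dot_row dot_dl.
  move=> h; apply: (mulfI (_ : (144 : R) != 0)); first by rewrite pnatr_eq0.
  by rewrite mulrCA h.
have d9 : \det A ^+ 9 = 1.
  have := congr1 determinant hM; rewrite det1 detZ det_mulmx det_tr.
  by move=> <-; ring.
have dpos : 0 < \det A.
  have := key (dl ord0) (dl ord0); rewrite dot_dl eqxx mulr1 => h.
  have hs := dot_ge0 (dl ord0 *m A).
  move: h hs; set s := dot _ _; set d := \det A => h hs.
  nra.
apply/eqP; rewrite -(@eqrXn2 _ 9) //; [by rewrite d9 expr1n | exact: ltW].
Qed.

End F.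


Section Fin.
Variable R : realType.
Notation vec := (vec R).
Notation o i := (@inord 6 i).
Local Notation dl := (@dl R).

Lemma cube_root (n : R) :
  exists a b : R, a ^+ 3 - 3 * a * b ^+ 2 = 1 /\ 3 * a ^+ 2 * b - b ^+ 3 = n.
Proof.
pose t := atan n / 3.
pose X := Num.sqrt (1 + n ^+ 2).
have X0 : 0 < X by rewrite /X sqrtr_gt0; apply: ltr_pwDl => //; exact: sqr_ge0.
pose c0 := X `^ (3^-1).
have c03 : c0 ^+ 3 = X.
  rewrite /c0 -powR_mulrn ?powR_ge0 // -powRrM mulVf ?powRr1 ?pnatr_eq0 //.
  exact: ltW.
have ht : 3 * t = atan n by rewrite /t mulrC -mulrA mulVf ?mulr1 // pnatr_eq0.
have hcos : cos (atan n) = X^-1 by rewrite cos_atan.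
have hcne : cos (atan n) != 0 by rewrite hcos invr_eq0 gt_eqF.
have hsin : sin (atan n) = n * X^-1.
  have h : sin (atan n) / cos (atan n) = n by have := atanK n; rewrite /tan.
  by rewrite -hcos -[in X in _ = X * _]h mulfVK.
have h3 : 3 * t = t + t + t by ring.
have c3 : cos (3 * t) = cos t ^+ 3 - 3 * cos t * sin t ^+ 2.
  by rewrite h3 (cosD (t + t) t) (cosD t t) (sinD t t); ring.
have s3 : sin (3 * t) = 3 * cos t ^+ 2 * sin t - sin t ^+ 3.
  by rewrite h3 (sinD (t + t) t) (sinD t t) (cosD t t); ring.
exists (c0 * cos t), (c0 * sin t); split.
  transitivity (c0 ^+ 3 * cos (3 * t)); first by rewrite c3; ring.
  by rewrite c03 ht hcos mulfV // gt_eqF.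
transitivity (c0 ^+ 3 * sin (3 * t)); first by rewrite s3; ring.
by rewrite c03 ht hsin mulrCA mulfV ?mulr1 // gt_eqF.
Qed.


Lemma mk7_add a1 a2 a3 a4 a5 a6 a7 b1 b2 b3 b4 b5 b6 b7 :
  mk7 (a1 + b1) (a2 + b2) (a3 + b3) (a4 + b4) (a5 + b5) (a6 + b6) (a7 + b7)
  = mk7 a1 a2 a3 a4 a5 a6 a7 + mk7 b1 b2 b3 b4 b5 b6 b7 :> vec.
Proof. by apply/rowP => k; rewrite !mxE; case: k => [[|[|[|[|[|[|[|k]]]]]]] hk]. Qed.

Lemma mk7_scale (c : R) a1 a2 a3 a4 a5 a6 a7 :
  mk7 (c * a1) (c * a2) (c * a3) (c * a4) (c * a5) (c * a6) (c * a7)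
  = c *: mk7 a1 a2 a3 a4 a5 a6 a7 :> vec.
Proof. by apply/rowP => k; rewrite !mxE; case: k => [[|[|[|[|[|[|[|k]]]]]]] hk]. Qed.

Lemma J_add (y p q : vec) : J y (p + q) = J y p + J y q.
Proof. by rewrite /J -mk7_add; congr mk7; rewrite /x !mxE; ring. Qed.

Lemma J_scale (y p : vec) (c : R) : J y (c *: p) = c *: J y p.
Proof. by rewrite /J -mk7_scale; congr mk7; rewrite /x !mxE; ring. Qed.

Lemma J_self (y : vec) : J y y = 0.
Proof.
apply/rowP => k; rewrite /J !mxE; case: k => [[|[|[|[|[|[|[|k]]]]]]] hk] //=.
all: ring.
Qed.

Lemma dot_add1 (p q y : vec) : dot (p + q) y = dot p y + dot q y.
Proof. by rewrite /dot /x !mxE; ring. Qed.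

Lemma dot_scale1 (c : R) (p y : vec) : dot (c *: p) y = c * dot p y.
Proof. by rewrite /dot /x !mxE; ring. Qed.

Lemma dot_scale2 (c : R) (p : vec) : dot (c *: p) (c *: p) = c ^+ 2 * dot p p.
Proof. by rewrite /dot /x !mxE; ring. Qed.

Lemma Pv_add y a be b (p q : vec) : Pv y a be b (p + q) = Pv y a be b p + Pv y a be b q.
Proof. by rewrite /Pv J_add dot_add1; apply/rowP => k; rewrite !mxE; ring. Qed.

Lemma Pv_scale y a be b (c : R) (p : vec) : Pv y a be b (c *: p) = c *: Pv y a be b p.
Proof. by rewrite /Pv J_scale dot_scale1; apply/rowP => k; rewrite !mxE; ring. Qed.

Lemma mx_of_lin (f : vec -> vec) : (forall p q, f (p + q) = f p + f q) ->
  (forall c p, f (c *: p) = c *: f p) ->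
  forall u : vec, u *m (\matrix_(i, j) f (dl i) 0 j) = f u.
Proof.
move=> hadd hs u.
have f0 : f 0 = 0 by have := hs 0 0; rewrite !scale0r.
rewrite {1}(row_sum_delta u) mulmx_suml {2}(row_sum_delta u).
apply: (big_ind2 (fun p q => p = f q)).
- by rewrite f0.
- by move=> p1 q1 p2 q2 -> ->; rewrite hadd.
- move=> i _; rewrite hs -scalemxAl; congr (_ *: _).
  by rewrite -rowE; apply/rowP => j; rewrite !mxE.
Qed.

Lemma psi0_WW (W p q : vec) : psi0 W W p q = 0.
Proof. by rewrite /psi0 /dx4 /dx3; ring. Qed.

Lemma psi0_0 (p q r : vec) : psi0 0 p q r = 0.
Proof. by rewrite psi0_e1 big1 // => i _; rewrite mxE mul0r. Qed.

Lemma volf_mul (F : 'M[R]_7) (vs : 'I_7 -> vec) :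
  volf F vs = \det (\matrix_(i, j) vs i 0 j) * \det (invmx F).
Proof.
rewrite /volf -det_mulmx; congr (\det _); apply/matrixP => i j; rewrite !mxE.
by apply: eq_bigr => l _; rewrite !mxE.
Qed.

Lemma main_gen (phit : form3 R) (E F0 : 'M[R]_7) (k : R) :
  E \in unitmx -> adapted phit F0 -> \det (invmx F0) = k * \det (invmx E) ->
  is_G2 phit /\ forall F, adapted phit F -> forall vs, volf F vs = k * volf E vs.
Proof.
move=> hE hadF0 hdet; split; first by exists F0.
move=> F [hF hadF] vs.
have hF0 := hadF0.1.
have hA : forall u v z : vec,
    phi0 (u *m (F0 *m invmx F)) (v *m (F0 *m invmx F)) (z *m (F0 *m invmx F)) = phi0 u v z.
  move=> u v z.
  have h1 := hadF (u *m F0) (v *m F0) (z *m F0).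
  have h2 := hadF0.2 (u *m F0) (v *m F0) (z *m F0).
  rewrite h1 /coords !mulmxK // in h2.
  by rewrite !mulmxA.
have dA := stab_det hA.
have dF0 : \det F0 != 0 by rewrite -unitfE -unitmxE.
have hiF : \det (invmx F) = \det (invmx F0).
  rewrite (det_inv F0); apply: (mulfI dF0); rewrite -det_mulmx dA mulfV //.
rewrite !volf_mul hiF hdet; ring.
Qed.

Lemma powR_32 (s : R) : 0 <= s -> (s ^+ 3) `^ (2%:R / 3%:R) = s ^+ 2.
Proof.
move=> hs.
rewrite -powR_mulrn // -powRrM (_ : 3%:R * (2%:R / 3%:R) = 2%:R :> R) ?powR_mulrn //.
by rewrite mulrCA mulfV ?mulr1 // pnatr_eq0.
Qed.

End Fin.


Local Notation o i := (@inord 6 i).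

Theorem mainTheorem13 (R : realType) (phio : form3 R) (E : 'M[R]_7)
  (hE : adapted phio E) (w : vec R) :
  let phit := add3 phio (contr4 w (hodge3 E phio)) in
  is_G2 phit /\
  forall F : 'M[R]_7, adapted phit F ->
    forall vs : 'I_7 -> vec R,
      volf F vs = (1 + metric E w w) `^ (2%:R / 3%:R) * volf E vs.
Proof.
move=> phit.
have hEu := hE.1.
have [W hW] : {W : vec R | W = coords E w} by exists (coords E w).
have hmet : metric E w w = dot W W by rewrite hW /metric dotE.
have hphit : forall u v z, phit u v z = phi0 (coords E u) (coords E v) (coords E z)
    + psi0 W (coords E u) (coords E v) (coords E z).
  by move=> u v z; rewrite /phit /add3 /contr4 hE.2 (hodge_psi hE) hW.
rewrite hmet.
case: (eqVneq (dot W W) 0) => hWW0.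
  have hWW : dot W W = 0 :> R := hWW0.
  have W0 : W = 0.
    apply/rowP => j; rewrite mxE.
    have h0 : forall i : 'I_7, predT i -> W 0 i ^+ 2 = 0.
      apply: (@psumr_eq0P _ _ predT (fun i => W 0 i ^+ 2)) => [i _|]; first exact: sqr_ge0.
      transitivity (dot W W); last exact: hWW.
      by rewrite dotE; apply: eq_big => [i|i _]; rewrite ?expr2.
    by apply/eqP; rewrite -sqrf_eq0 h0.
  have hadE : adapted phit E.
    by split => // u v z; rewrite hphit W0 psi0_0 addr0.
  have [hG hvol] := main_gen (k := 1) hEu hadE (esym (mul1r _)).
  by split => // F hF vs; rewrite hvol // hWW addr0 powR1.
have hpos : 0 < dot W W by rewrite lt_neqAle eq_sym hWW0 dot_ge0.
have [n hn] : {n : R | n = Num.sqrt (dot W W)} by exists (Num.sqrt (dot W W)).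
have n0 : 0 < n by rewrite hn sqrtr_gt0.
have n2 : n ^+ 2 = dot W W by rewrite hn sqr_sqrtr // ltW.
have [y hy] : {y : vec R | y = n^-1 *: W} by exists (n^-1 *: W).
have hyy : dot y y = 1.
  by rewrite hy dot_scale2 -n2 exprVn mulVf // expf_neq0 // gt_eqF.
have hWy : W = n *: y by rewrite hy scalerA mulfV ?scale1r // gt_eqF.
have [a [b [ha hb]]] := cube_root n.
have [s hs] : {s : R | s = a ^+ 2 + b ^+ 2} by exists (a ^+ 2 + b ^+ 2).
have s0 : 0 < s.
  rewrite hs lt_neqAle addr_ge0 ?sqr_ge0 // andbT eq_sym paddr_eq0 ?sqr_ge0 //.
  apply/negP => /andP [ha0 hb0].
  move: ha0 hb0; rewrite !sqrf_eq0 => /eqP a0 /eqP b0.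
  by move: ha; rewrite a0 b0 !expr0n /= !(mul0r, mulr0, subr0) => /eqP; rewrite eq_sym oner_eq0.
have [mu hmu] : {mu : R | mu = s^-1} by exists s^-1.
have [be hbe] : {be : R | be = mu - a} by exists (mu - a).
have [P hPdef] : {P : 'M[R]_7 | P = \matrix_(i, j) Pv y a be b (@dl R i) 0 j}.
  by exists (\matrix_(i, j) Pv y a be b (@dl R i) 0 j).
have hP : forall u, u *m P = Pv y a be b u.
  move=> u; rewrite hPdef; apply: mx_of_lin => [p q|c p]; [exact: Pv_add | exact: Pv_scale].
have E1 : forall U V Z : vec R, phi0 (Pv y a be b U) (Pv y a be b V) (Pv y a be b Z)
    = phi0 U V Z + psi0 W U V Z.
  move=> U V Z; rewrite E1core hyy !mulr1 hWy psi0_sc1.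
  have -> : a ^+ 2 * be + 4 * a * b ^+ 2 + be * b ^+ 2 = 0.
    have -> : a ^+ 2 * be + 4 * a * b ^+ 2 + be * b ^+ 2
      = mu * s - (a ^+ 3 - 3 * a * b ^+ 2) by rewrite hbe hs; ring.
    by rewrite hmu mulVf ?gt_eqF // ha subrr.
  by rewrite ha hb; ring.
have Pvy : Pv y a be b y = mu *: y.
  by rewrite /Pv J_self hyy scaler0 addr0 mulr1 -scalerDl hbe; congr (_ *: _); ring.
have dPW : dot (Pv y a be b W) (Pv y a be b W) = (n * mu) ^+ 2.
  by rewrite hWy Pv_scale Pvy scalerA dot_scale2 hyy mulr1.
have K1 := K7_Fphi (Pv y a be b W) (Pv y a be b W) P.
rewrite Bq_val dPW in K1.
have K2 : K7 (Fphi (Pv y a be b W) (Pv y a be b W)) P = 144 * dot W W.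
  have [FL hFL] : {FL : ('I_7 -> vec R) -> R | FL = fun v => phi0 W (v (o 0)) (v (o 1))
      * phi0 W (v (o 2)) (v (o 3)) * psi0 W (v (o 4)) (v (o 5)) (v (o 6))}.
    by eexists.
  transitivity (K7 (Fphi W W) 1%:M + K7 FL 1%:M).
    transitivity (\sum_(s' : 'S_7) (-1) ^+ s' * (Fphi W W (fun i => row (s' i) 1%:M)
        + FL (fun i => row (s' i) 1%:M))).
      rewrite /K7; apply: eq_bigr => s' _; congr (_ * _).
      have hr : forall i, row i P = Pv y a be b (row i 1%:M).
        by move=> i; rewrite rowE hP row1.
      rewrite hFL /Fphi !hr !E1 !psi0_WW !addr0; ring.
    rewrite /K7 -big_split; apply: eq_bigr => s' _; exact: mulrDr.
  rewrite K7_Fphi det1 mul1r Bq_val hFL.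
  rewrite (@K7_val R (fun p q => phi0 W p q) (fun p q => phi0 W p q)
    (fun p q r => psi0 W p q r) (phi0_bil W) (phi0_bil W) (psi0_tril W)).
  by rewrite L_val mulr0 addr0.
have detP : \det P = s ^+ 2.
  have e1 : \det P * (144 * (n * mu) ^+ 2) = 144 * n ^+ 2 by rewrite -K1 K2 n2.
  have hq : 144 * (n * mu) ^+ 2 != 0.
    have mu0 : mu != 0 by rewrite hmu invr_eq0 gt_eqF.
    have nz : n != 0 by rewrite gt_eqF.
    by rewrite mulf_neq0 ?pnatr_eq0 // expf_neq0 // mulf_neq0.
  apply: (mulIf hq); rewrite e1 hmu.
  rewrite (_ : s ^+ 2 * (144 * (n * s^-1) ^+ 2) = 144 * n ^+ 2 * (s * s^-1) ^+ 2); last by ring.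
  by rewrite mulfV ?expr1n ?mulr1 // gt_eqF.
have hPu : P \in unitmx by rewrite unitmxE unitfE detP expf_neq0 // gt_eqF.
have [F0 hF0] : {F0 : 'M[R]_7 | F0 = invmx (invmx E *m P)} by exists (invmx (invmx E *m P)).
have hc : forall u, coords F0 u = Pv y a be b (coords E u).
  by move=> u; rewrite /coords hF0 invmxK mulmxA hP.
have hadF0 : adapted phit F0.
  split; first by rewrite hF0 unitmx_inv unitmx_mul unitmx_inv hEu hPu.
  by move=> u v z; rewrite hphit !hc E1.
have hdet : \det (invmx F0) = \det P * \det (invmx E).
  by rewrite hF0 invmxK det_mulmx mulrC.
have [hG hvol] := main_gen hEu hadF0 hdet.
split => // F hF vs; rewrite hvol //; congr (_ * _).
have h3 : s ^+ 3 = 1 + n ^+ 2.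
  have -> : s ^+ 3 = (a ^+ 3 - 3 * a * b ^+ 2) ^+ 2 + (3 * a ^+ 2 * b - b ^+ 3) ^+ 2.
    by rewrite hs; ring.
  by rewrite ha hb expr1n.
by rewrite detP -n2 -h3 powR_32 // ltW.
Qed.
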